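(* Suppose $\mathcal I_{CAS}=\langle\mathcal I,\chi\rangle$ is a justified CAS-model of a DL-Lite$_R$ DKB $\mathcal K'$. Then $\mathcal I_{CAS}$ is not necessarily a justified CAS-model of every $\mathcal K\subset\mathcal K'$; that is, there exist a DKB $\mathcal K'$, a justified CAS-model $\mathcal I_{CAS}$ of $\mathcal K'$ and a DKB $\mathcal K\subset\mathcal K'$ such that $\mathcal I_{CAS}$ is not a justified CAS-model of $\mathcal K$.
   Context: DL-Lite$_R$: pairwise disjoint countably infinite sets $\mathrm{NC}$, $\mathrm{NR}$, $\mathrm{NI}$; a role is $R$ or $R^-$; concepts $C ::= A\mid\exists R$ (left), $D ::= A\mid\neg C\mid\exists R$ (right). Axioms: $C\sqsubseteq D$, $S\sqsubseteq R$, $\mathrm{Dis}(R,S)$, $\mathrm{Inv}(R,S)$, $\mathrm{Irr}(R)$ (no reflexivity), assertions $D(a)$, $R(a,b)$, usual semantics. Standard name assumption: an infinite set $\mathrm{NI}_S\subseteq\mathrm{NI}$ of standard names is the domain of every interpretation, $c^{\mathcal I}=c$ for $c\in\mathrm{NI}_S$. Axioms are identified with universal first-order sentences $\forall\vec x\,\phi_\alpha(\vec x)$ via the standard translation with right-hand existentials Skolemized by a unary Skolem function $f_R$ per atomic role; $\alpha(\vec e):=\phi_\alpha(\vec e)$. A DKB is a finite set of DL-Lite$_R$ axioms and defeasible axioms $\mathrm D(\alpha)$. Clashing assumption $\langle\alpha,\vec e\rangle$; clashing set: satisfiable set $S$ of assertions and negated assertions with $S\cup\{\alpha(\vec e)\}$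 unsatisfiable. $\langle\mathcal I,\chi\rangle$ ($\chi$ a set of clashing assumptions) is a CAS-model of $\mathcal K$ if $\mathcal I$ satisfies the non-defeasible axioms of $\mathcal K$ and $\mathcal I\models\phi_\alpha(\vec d)$ for all $\mathrm D(\alpha)\in\mathcal K$ and tuples $\vec d$ with $\langle\alpha,\vec d\rangle\notin\chi$. NI-congruent: same interpretation of all constants in $\mathrm{NI}$. $\langle\alpha,\vec e\rangle\in\chi$ is justified if some clashing set for it holds in every CAS-model $\langle\mathcal I',\chi\rangle$ of $\mathcal K$ NI-congruent to $\langle\mathcal I,\chi\rangle$; a CAS-model is justified if all its clashing assumptions are justified. *)

(* Defs.v *)
From Stdlib Require Import List Arith.
Import ListNotations.
Set Implicit Arguments.

(* Concept names NC, role names NR and individual names NI are all encoded by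
   [nat]; they live in different syntactic positions, hence are disjoint. *)

Inductive role : Type :=
| Rn   (p : nat)
| Rinv (p : nat).

(* left-hand side concepts  C ::= A | exists R *)
Inductive lconcept : Type :=
| LA  (a : nat)
| LEx (r : role).

(* right-hand side concepts  D ::= A | not C | exists R *)
Inductive rconcept : Type :=
| RA   (a : nat)
| RNeg (c : lconcept)
| REx  (r : role).

Inductive axiom : Type :=
| CIncl   (c : lconcept) (d : rconcept)
| RIncl   (s r : role)
| Dis     (r s : role)
| Inv     (r s : role)
| Irr     (r : role)
| CAssert (d : rconcept) (a : nat)
| RAssert (r : role) (a b : nat).

Inductive kitem : Type :=
| Strict (al : axiom)
| Defeasible (al : axiom).

Definition DKB := list kitem.

Definition dkb_proper_subset (K K' : DKB) : Prop :=
  (forall it, In it K -> In it K') /\ exists it, In it K' /\ ~ In it K.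

Section Sem.
(* [std] is the set NI_S of standard names (a subset of NI = nat) *)
Variable std : nat -> bool.

(* the domain of every interpretation: NI_S *)
Definition Dom := { n : nat | std n = true }.

Record interp : Type := {
  cI : nat -> Dom;
  cI_std : forall c (h : std c = true), cI c = exist _ c h;
  AI : nat -> Dom -> Prop;
  RI : nat -> Dom -> Dom -> Prop;
  fI : role -> Dom -> Dom                   (* Skolem function f_R *)
}.

Variable I : interp.

Definition holdsR (r : role) (x y : Dom) : Prop :=
  match r with
  | Rn p => RI I p x y
  | Rinv p => RI I p y x
  end.

(* ---- usual (non-Skolemized) semantics, used for (negated) assertions ---- *)
Definition lconceptD (c : lconcept) (x : Dom) : Prop :=
  match c with
  | LA a => AI I a x
  | LEx r => exists y, holdsR r x y
  end.

Definition rconceptD (d : rconcept) (x : Dom) : Prop :=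
  match d with
  | RA a => AI I a x
  | RNeg c => ~ lconceptD c x
  | REx r => exists y, holdsR r x y
  end.

Inductive literal : Type :=
| PosC (d : rconcept) (a : nat)
| NegC (d : rconcept) (a : nat)
| PosR (r : role) (a b : nat)
| NegR (r : role) (a b : nat).

Definition lit_holds (l : literal) : Prop :=
  match l with
  | PosC d a => rconceptD d (cI I a)
  | NegC d a => ~ rconceptD d (cI I a)
  | PosR r a b => holdsR r (cI I a) (cI I b)
  | NegR r a b => ~ holdsR r (cI I a) (cI I b)
  end.

(* ---- standard translation with Skolemization: alpha |-> forall xs, phi_alpha(xs) ---- *)

(* left-hand concept at x; an existential on the left becomes a universally
   quantified variable y (taken from the tuple) *)
Definition lhs_at (c : lconcept) (x : Dom) (l : list Dom) : option (Prop * list Dom) :=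
  match c, l with
  | LA a, l => Some (AI I a x, l)
  | LEx r, y :: l' => Some (holdsR r x y, l')
  | LEx _, [] => None
  end.

(* right-hand concept at x: exists R is Skolemized by f_R; not(exists R)
   becomes a universally quantified variable z (taken from the tuple) *)
Definition rhs_at (d : rconcept) (x : Dom) (l : list Dom) : option Prop :=
  match d, l with
  | RA b, [] => Some (AI I b x)
  | RNeg (LA a), [] => Some (~ AI I a x)
  | RNeg (LEx r), [z] => Some (~ holdsR r x z)
  | REx r, [] => Some (holdsR r x (fI I r x))
  | _, _ => None
  end.

(* phi_alpha(e).  Tuples e of the wrong shape (length) for alpha do not
   correspond to instances of the universal sentence; for them phi is [True]. *)
Definition phi (al : axiom) (e : list Dom) : Prop :=
  match al with
  | CIncl c d =>
      match e with
      | x :: l =>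
          match lhs_at c x l with
          | Some (P, l') => match rhs_at d x l' with Some Q => P -> Q | None => True end
          | None => True
          end
      | [] => True
      end
  | RIncl s r => match e with [x; y] => holdsR s x y -> holdsR r x y | _ => True end
  | Dis r s => match e with [x; y] => ~ (holdsR r x y /\ holdsR s x y) | _ => True end
  | Inv r s => match e with [x; y] => (holdsR r x y <-> holdsR s y x) | _ => True end
  | Irr r => match e with [x] => ~ holdsR r x x | _ => True end
  | CAssert d a => match rhs_at d (cI I a) e with Some Q => Q | None => True end
  | RAssert r a b => match e with [] => holdsR r (cI I a) (cI I b) | _ => True end
  end.

Definition sat_axiom (al : axiom) : Prop := forall e, phi al e.

End Sem.

Arguments literal : clear implicits.

Definition clash_assumption (std : nat -> bool) : Type := (axiom * list (Dom std))%type.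
Definition CAset (std : nat -> bool) : Type := clash_assumption std -> Prop.

Definition lits_hold std (I : interp std) (S : literal -> Prop) : Prop :=
  forall l, S l -> lit_holds I l.

Definition clashing_set std (S : literal -> Prop) (al : axiom) (e : list (Dom std)) : Prop :=
  (exists I : interp std, lits_hold I S) /\
  ~ (exists I : interp std, lits_hold I S /\ phi I al e).

Definition CAS_model std (K : DKB) (I : interp std) (chi : CAset std) : Prop :=
  (forall al, In (Strict al) K -> sat_axiom I al) /\
  (forall al, In (Defeasible al) K -> forall d, ~ chi (al, d) -> phi I al d).

Definition NI_congruent std (I I' : interp std) : Prop :=
  forall c, cI I c = cI I' c.

Definition justified_assumption std (K : DKB) (I : interp std) (chi : CAset std)
    (ca : clash_assumption std) : Prop :=
  exists S : literal -> Prop,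
    clashing_set S (fst ca) (snd ca) /\
    forall I' : interp std, CAS_model K I' chi -> NI_congruent I I' -> lits_hold I' S.

Definition justified_CAS_model std (K : DKB) (I : interp std) (chi : CAset std) : Prop :=
  CAS_model K I chi /\ forall ca, chi ca -> justified_assumption K I chi ca.

(* Main.v *)
Require Import Defs.
From Stdlib Require Import List Arith Eqdep_dec.
Import ListNotations.

Section Build.
Variable std : nat -> bool.
Variable d0 : Dom std.

Definition mkc (c : nat) : Dom std :=
  (match std c as b return std c = b -> Dom std with
   | true => fun h => exist _ c h
   | false => fun _ => d0
   end) eq_refl.

Lemma mkc_std : forall c (h : std c = true), mkc c = exist _ c h.
Proof.
  intros c h. unfold mkc.
  generalize (@eq_refl bool (std c)).
  generalize (std c) at 2 3. intros b e.
  destruct b.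
  - f_equal. apply UIP_dec. decide equality.
  - congruence.
Qed.

Definition mkI (A : nat -> Dom std -> Prop) : interp std :=
  {| cI := mkc; cI_std := mkc_std; AI := A;
     RI := fun _ _ _ => False; fI := fun _ x => x |}.
End Build.

Theorem proposition4 :
  forall std : nat -> bool,
    (forall n, exists m, n <= m /\ std m = true) ->
    exists (K' : DKB) (I : interp std) (chi : CAset std) (K : DKB),
      justified_CAS_model K' I chi /\
      dkb_proper_subset K K' /\
      ~ justified_CAS_model K I chi.
Proof.
  intros std Hstd.
  destruct (Hstd 0) as [a [_ Ha]].
  set (d0 := exist (fun n => std n = true) a Ha).
  set (I0 := @mkI std d0 (fun _ _ => False)).
  set (I1 := @mkI std d0 (fun _ _ => True)).
  set (al := CAssert (RA 0) a).
  exists [Strict (CAssert (RNeg (LA 0)) a); Defeasible al], I0,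
    (fun ca => ca = (al, [])), [Defeasible al].
  assert (HCAS : forall K, (forall x, In (Strict x) K -> x = CAssert (RNeg (LA 0)) a) ->
      (forall x, In (Defeasible x) K -> x = al) -> CAS_model K I0 (fun ca => ca = (al, []))).
  { intros K HS HD. split.
    - intros x Hx e. rewrite (HS x Hx). simpl. destruct e as [|y e]; simpl; auto.
    - intros x Hx d Hd. rewrite (HD x Hx) in *. destruct d as [|y d].
      + exfalso; apply Hd; reflexivity.
      + simpl. exact I. }
  split; [split|split].
  - apply HCAS; simpl; intros x Hx; intuition congruence.
  - intros ca Hca. subst ca.
    exists (fun l => l = NegC (RA 0) a). split.
    + split.
      * exists I0. intros l Hl; subst l. simpl. auto.
      * intros [J [HJ Hp]]. specialize (HJ _ eq_refl). simpl in HJ, Hp. auto.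
    + intros I' [HS _] Hc l Hl. subst l. simpl.
      specialize (HS (CAssert (RNeg (LA 0)) a) (or_introl eq_refl) []).
      simpl in HS. exact HS.
  - split.
    + intros it [H|[]]. right; left; exact H.
    + exists (Strict (CAssert (RNeg (LA 0)) a)). split; [left; reflexivity|].
      intros [H|[]]; discriminate.
  - intros [_ HJ]. destruct (HJ (al, []) eq_refl) as [S [[_ Hcl] HS]].
    apply Hcl. exists I1. split.
    + apply HS.
      * split.
        -- intros x [H|[]]; discriminate.
        -- intros x [H|[]] d _. injection H as <-. unfold al. destruct d; simpl; exact I.
      * intros c. reflexivity.
    + simpl. exact I.
Qed.
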